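(* Let $L$ be a distributive lattice with $|L|\ge2$. Then: (1) $\mathrm{FBL}\langle L\rangle$ is not Dedekind $\sigma$-complete; (2) the norm of $\mathrm{FBL}\langle L\rangle$ is not order continuous; (3) $\mathrm{FBL}\langle L\rangle$ has no atoms.
   Context: $L^*$ is the set of all lattice homomorphisms $x^*:L\to[-1,1]$; for $x\in L$, $\delta_x:L^*\to\mathbb R$ is $\delta_x(x^* )=x^*(x)$. A function $f:L^*\to\mathbb R$ is positively homogeneous if $f(\lambda x^* )=\lambda f(x^* )$ whenever $\lambda\ge0$ and $\lambda x^*\in L^*$; for such $f$, $\|f\|=\sup\{\sum_{i=1}^m|f(x_i^* )|: m\in\mathbb N,\ x_i^*\in L^*,\ \sup_{x\in L}\sum_{i=1}^m|x_i^*(x)|\le1\}$. $\mathrm{FBL}\langle L\rangle$ is the norm closure of the vector sublattice generated by $\{\delta_x:x\in L\}$ inside the Banach lattice of positively homogeneous functions on $L^*$ with finite norm, with pointwise order and operations. *)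

(* Defs.v *)
From HB Require Import structures.
From mathcomp Require Import all_boot all_order all_algebra.
From mathcomp Require Import classical_sets reals.
Set Implicit Arguments. Unset Strict Implicit. Unset Printing Implicit Defensive.
Import Order.TTheory GRing.Theory Num.Theory.
Local Open Scope ring_scope.

Section FBL.
Variables (R : realType) (d : Order.disp_t) (L : distrLatticeType d).

Definition is_Lstar (h : L -> R) : Prop :=
  (forall a, -1 <= h a <= 1) /\
  (forall a b, h (Order.meet a b) = Num.min (h a) (h b)) /\
  (forall a b, h (Order.join a b) = Num.max (h a) (h b)).

Record Lstar := MkLstar { lsfun :> L -> R; lsprop : is_Lstar lsfun }.

Definition LFun := Lstar -> R.

Definition delta (x : L) : LFun := fun xs => xs x.

Definition pos_homogeneous (f : LFun) : Prop :=
  forall (xs ys : Lstar) (lam : R), 0 <= lam ->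
    (forall a, ys a = lam * xs a) -> f ys = lam * f xs.

Definition norm_set (f : LFun) : set R :=
  [set s | exists (m : nat) (X : 'I_m -> Lstar),
      (forall a : L, \sum_(i < m) `|X i a| <= 1) /\
      s = \sum_(i < m) `|f (X i)|].

Definition fnorm (f : LFun) : R := sup (norm_set f).

Definition inH (f : LFun) : Prop := pos_homogeneous f /\ has_ubound (norm_set f).

Inductive inFVL : LFun -> Prop :=
  | FVL_delta x : inFVL (delta x)
  | FVL_zero : inFVL (fun _ => 0)
  | FVL_add f g : inFVL f -> inFVL g -> inFVL (fun xs => f xs + g xs)
  | FVL_scale (c : R) f : inFVL f -> inFVL (fun xs => c * f xs)
  | FVL_max f g : inFVL f -> inFVL g -> inFVL (fun xs => Num.max (f xs) (g xs))
  | FVL_min f g : inFVL f -> inFVL g -> inFVL (fun xs => Num.min (f xs) (g xs)).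

Definition inFBL (f : LFun) : Prop :=
  inH f /\ forall eps : R, 0 < eps ->
    exists g, inFVL g /\ fnorm (fun xs => f xs - g xs) < eps.

Definition fle (f g : LFun) : Prop := forall xs, f xs <= g xs.

Definition is_sup_in (S A : LFun -> Prop) (s : LFun) : Prop :=
  S s /\ (forall a, A a -> fle a s) /\
  (forall t, S t -> (forall a, A a -> fle a t) -> fle s t).

Definition is_inf_in (S A : LFun -> Prop) (s : LFun) : Prop :=
  S s /\ (forall a, A a -> fle s a) /\
  (forall t, S t -> (forall a, A a -> fle t a) -> fle t s).

(* Dedekind sigma-completeness: every countable (nonempty) subset which is
   bounded above has a supremum. Countable nonempty subsets = ranges of sequences. *)
Definition dedekind_sigma_complete (S : LFun -> Prop) : Prop :=
  forall u : nat -> LFun, (forall n, S (u n)) ->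
    (exists b, S b /\ forall n, fle (u n) b) ->
    exists s, is_sup_in S (fun a => exists n, a = u n) s.

Definition order_continuous_norm (S : LFun -> Prop) : Prop :=
  forall (I : Type) (le : I -> I -> Prop) (x : I -> LFun),
    (exists i : I, True) ->
    (forall i, le i i) ->
    (forall i j k, le i j -> le j k -> le i k) ->
    (forall i j, exists k, le i k /\ le j k) ->
    (forall i, S (x i)) ->
    (forall i j, le i j -> fle (x j) (x i)) ->
    is_inf_in S (fun a => exists i, a = x i) (fun _ => 0) ->
    forall eps : R, 0 < eps -> exists i0, forall i, le i0 i -> fnorm (x i) < eps.

Definition is_atom (S : LFun -> Prop) (a : LFun) : Prop :=
  S a /\ fle (fun _ => 0) a /\ (exists xs, a xs <> 0) /\
  forall g, S g -> fle (fun _ => 0) g -> fle g a ->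
    exists lam : R, 0 <= lam /\ forall xs, g xs = lam * a xs.

End FBL.

(* Main.v *)
Require Import Defs.
From HB Require Import structures.
From mathcomp Require Import all_boot all_order all_algebra.
From mathcomp Require Import classical_sets reals.
From mathcomp Require Import boolp ring lra.
Import Order.TTheory GRing.Theory Num.Theory.
Local Open Scope ring_scope.

Section S.
Local Open Scope classical_set_scope.
Local Open Scope ring_scope.
Local Set Implicit Arguments. Local Unset Strict Implicit.
Variables (R : realType) (d : Order.disp_t) (L : distrLatticeType d).

Lemma min01 : (Num.min 0 1 : R) = 0 /\ (Num.min 1 0 : R) = 0 /\ (Num.max 0 1 : R) = 1 /\ (Num.max 1 0 : R) = 1.
Proof. by rewrite min_l ?ler01 // min_r ?ler01 // max_r ?ler01 // max_l ?ler01. Qed.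

Lemma nonconst_hom : (exists a b : L, a <> b) ->
  exists (w : Lstar R L) (p q : L), w p = 0 /\ w q = 1.
Proof.
move=> [a [b ab]].
pose p := Order.meet a b; pose q := Order.join a b.
have nqp : ~ (q <= p)%O.
  move=> qp; apply: ab; apply/eqP; rewrite eq_le; apply/andP; split.
    exact: (le_trans (leUl a b) (le_trans qp (leIr b a))).
  exact: (le_trans (leUr b a) (le_trans qp (leIl a b))).
pose P (A : set L) := [/\ (forall x y, A x -> A y -> A (Order.meet x y)),
   (forall x y, A x -> (x <= y)%O -> A y), ~ A p & (forall x, A x -> A q)].
have [M [[Mm Mu Mp Mq] Mmax]] : exists A, P A /\ forall B, A `<` B -> ~ P B.
  apply: Zorn_bigcup => F FP Ftot; split.
  - move=> x y [X FX Xx] [Y FY Yy].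
    have [XY|YX] := Ftot _ _ FX FY.
      by exists Y => //; have [H _ _ _] := FP _ FY; apply: H => //; apply: XY.
    by exists X => //; have [H _ _ _] := FP _ FX; apply: H => //; apply: YX.
  - move=> x y [X FX Xx] xy; exists X => //.
    by have [_ H _ _] := FP _ FX; apply: H Xx xy.
  - by move=> [X FX Xp]; have [_ _ H _] := FP _ FX; apply: H.
  - by move=> x [X FX Xx]; exists X => //; have [_ _ _ H] := FP _ FX; apply: H Xx.
have Mq' : M q.
  apply: contrapT => nMq.
  apply: (Mmax [set y | (q <= y)%O]).
    split; first by move=> x Mx; exfalso; exact/nMq/Mq/Mx.
    by move=> /(_ q (lexx q)).
  split => //=.
  - by move=> x y qx qy; rewrite lexI qx.
  - by move=> x y qx xy; apply: le_trans xy.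
have Mprime : forall x y, M (Order.join x y) -> M x \/ M y.
  move=> x y Mxy; apply: contrapT => /not_orP [nx ny].
  have key : forall z, ~ M z -> exists m, M m /\ (Order.meet m z <= p)%O.
    move=> z nz; apply: contrapT => hz.
    apply: (Mmax [set u | exists m, M m /\ (Order.meet m z <= u)%O]).
      split.
        by move=> u Mu0; exists u; split => //; exact: leIl.
      by move=> /(_ z) H; apply: nz; apply: H; exists q; split => //; exact: leIr.
    split.
    - move=> u v [m [Mm1 mu]] [m' [Mm2 mv]]; exists (Order.meet m m'); split.
        exact: Mm.
      rewrite lexI; apply/andP; split.
        apply: le_trans mu; rewrite lexI leIr andbT.
        exact: le_trans (leIl _ _) (leIl _ _).
      apply: le_trans mv; rewrite lexI leIr andbT.
      exact: le_trans (leIl _ _) (leIr _ _).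
    - by move=> u v [m [Mm1 mu]] uv; exists m; split => //; apply: le_trans uv.
    - by move=> [m [Mm1 mp]]; apply: hz; exists m.
    - by move=> u _; exists q; split => //; exact: leIl.
  have [m [Mm1 mx]] := key x nx.
  have [m' [Mm2 my]] := key y ny.
  apply: Mp; apply: ((Mu) (Order.meet (Order.meet m m') (Order.join x y))).
    by apply: (Mm) => //; apply: (Mm).
  rewrite meetUr leUx; apply/andP; split.
    apply: le_trans mx; rewrite lexI leIr andbT.
    exact: le_trans (leIl _ _) (leIl _ _).
  apply: le_trans my; rewrite lexI leIr andbT.
  exact: le_trans (leIl _ _) (leIr _ _).
pose w (x : L) : R := if `[< M x >] then 1 else 0.
have hw : is_Lstar w.
  have [m01 [m10 [M01 M10]]] := min01.
  split; [|split].
  - move=> x; rewrite /w; case: ifP => _.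
      by apply/andP; split; lra.
    by apply/andP; split; lra.
  - move=> x y; rewrite /w.
    case: (asboolP (M x)) => Mx; case: (asboolP (M y)) => My;
      case: (asboolP (M (Order.meet x y))) => Mxy //; rewrite ?minxx //.
    + by exfalso; apply: Mxy; apply: (Mm).
    + by exfalso; apply: My; apply: (Mu) Mxy _; exact: leIr.
    + by exfalso; apply: Mx; apply: (Mu) Mxy _; exact: leIl.
    + by exfalso; apply: Mx; apply: (Mu) Mxy _; exact: leIl.
  - move=> x y; rewrite /w.
    case: (asboolP (M x)) => Mx; case: (asboolP (M y)) => My;
      case: (asboolP (M (Order.join x y))) => Mxy //; rewrite ?maxxx //.
    + by exfalso; apply: Mxy; apply: (Mu) Mx _; exact: leUl.
    + by exfalso; apply: Mxy; apply: (Mu) Mx _; exact: leUl.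
    + by exfalso; apply: Mxy; apply: (Mu) My _; exact: leUr.
    + by exfalso; have [] := Mprime _ _ Mxy.
exists (MkLstar hw), p, q => /=; rewrite /w.
by case: (asboolP (M p)) => //; case: (asboolP (M q)).
Qed.
Lemma nb (x : R) : x <= `|x| /\ - x <= `|x|.
Proof. by split; [exact: ler_norm | rewrite -normrN; exact: ler_norm]. Qed.

Lemma max_lip (a b a' b' : R) :
  `|Num.max a b - Num.max a' b'| <= `|a - a'| + `|b - b'|.
Proof.
have [h1 h2] := nb (a - a'); have [h3 h4] := nb (b - b').
by case: (leP a b) => ab; case: (leP a' b') => ab'; rewrite ler_norml; apply/andP; split; lra.
Qed.

Lemma min_lip (a b a' b' : R) :
  `|Num.min a b - Num.min a' b'| <= `|a - a'| + `|b - b'|.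
Proof.
have [h1 h2] := nb (a - a'); have [h3 h4] := nb (b - b').
by case: (leP a b) => ab; case: (leP a' b') => ab'; rewrite ler_norml; apply/andP; split; lra.
Qed.

Lemma max_nrm (a b : R) : `|Num.max a b| <= `|a| + `|b|.
Proof.
have [h1 h2] := nb a; have [h3 h4] := nb b.
by case: (leP a b) => ab; rewrite ler_norml; apply/andP; split; lra.
Qed.

Lemma min_nrm (a b : R) : `|Num.min a b| <= `|a| + `|b|.
Proof.
have [h1 h2] := nb a; have [h3 h4] := nb b.
by case: (leP a b) => ab; rewrite ler_norml; apply/andP; split; lra.
Qed.

Lemma min_lip1 (a a' h : R) : `|Num.min a h - Num.min a' h| <= `|a - a'|.
Proof.
have [h1 h2] := nb (a - a').
by case: (leP a h) => ab; case: (leP a' h) => ab'; rewrite ler_norml; apply/andP; split; lra.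
Qed.

Lemma mul_max (l a b : R) : 0 <= l -> l * Num.max a b = Num.max (l * a) (l * b).
Proof.
move=> l0; case: (leP a b) => ab.
  by rewrite max_r // ler_wpM2l // ltW.
by rewrite max_l // ler_wpM2l // ltW.
Qed.

Lemma mul_min (l a b : R) : 0 <= l -> l * Num.min a b = Num.min (l * a) (l * b).
Proof.
move=> l0; case: (leP a b) => ab.
  by rewrite min_l // ler_wpM2l.
by rewrite min_r // ler_wpM2l // ltW.
Qed.

Lemma affL (w : Lstar R L) (al be : R) : 0 <= be ->
  (forall x, -1 <= al + be * w x <= 1) ->
  exists z : Lstar R L, forall x, z x = al + be * w x.
Proof.
move=> be0 hr.
have [_ [wm wj]] := lsprop w.
have h : is_Lstar (fun x => al + be * w x).
  split; [exact: hr|split] => x y.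
    by rewrite wm mul_min // -addr_minr.
  by rewrite wj mul_max // -addr_maxr.
by exists (MkLstar h).
Qed.


Notation LF := (LFun R L).
Notation Ls := (Lstar R L).

Lemma fvl_ph (g : LF) : inFVL g -> pos_homogeneous g.
Proof.
elim=> {g}.
- by move=> x xs ys lam _ h; rewrite /delta h.
- by move=> xs ys lam _ _; rewrite mulr0.
- move=> f g _ hf _ hg xs ys lam l0 h.
  by rewrite (hf _ _ _ l0 h) (hg _ _ _ l0 h) mulrDr.
- move=> c f _ hf xs ys lam l0 h.
  by rewrite (hf _ _ _ l0 h) mulrCA.
- move=> f g _ hf _ hg xs ys lam l0 h.
  by rewrite (hf _ _ _ l0 h) (hg _ _ _ l0 h) mul_max.
- move=> f g _ hf _ hg xs ys lam l0 h.
  by rewrite (hf _ _ _ l0 h) (hg _ _ _ l0 h) mul_min.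
Qed.

Lemma fvl_lip (g : LF) : inFVL g -> exists C : R, 0 <= C /\
  forall (xs ys : Ls) dl, (forall x, `|xs x - ys x| <= dl) -> `|g xs - g ys| <= C * dl.
Proof.
elim=> {g}.
- by move=> x; exists 1; split => // xs ys dl h; rewrite mul1r; exact: h.
- by exists 0; split => // xs ys dl _; rewrite subrr normr0 mul0r.
- move=> f g _ [C1 [C10 h1]] _ [C2 [C20 h2]]; exists (C1 + C2); split.
    exact: addr_ge0.
  move=> xs ys dl h; have := h1 _ _ _ h; have := h2 _ _ _ h.
  have := ler_normD (f xs - f ys) (g xs - g ys).
  have -> : f xs + g xs - (f ys + g ys) = f xs - f ys + (g xs - g ys) by ring.
  by move=> *; lra.
- move=> c f _ [C [C0 h1]]; exists (`|c| * C); split.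
    by apply: mulr_ge0.
  move=> xs ys dl h; rewrite -mulrBr normrM -mulrA.
  by apply: ler_wpM2l => //; exact: h1.
- move=> f g _ [C1 [C10 h1]] _ [C2 [C20 h2]]; exists (C1 + C2); split.
    exact: addr_ge0.
  move=> xs ys dl h; have := h1 _ _ _ h; have := h2 _ _ _ h.
  have := max_lip (f xs) (g xs) (f ys) (g ys).
  by move=> *; lra.
- move=> f g _ [C1 [C10 h1]] _ [C2 [C20 h2]]; exists (C1 + C2); split.
    exact: addr_ge0.
  move=> xs ys dl h; have := h1 _ _ _ h; have := h2 _ _ _ h.
  have := min_lip (f xs) (g xs) (f ys) (g ys).
  by move=> *; lra.
Qed.

Definition bnd (f : LF) := exists (G : seq L) (C : R), 0 <= C /\
  forall xs : Ls, `|f xs| <= C * \sum_(x <- G) `|xs x|.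

Lemma bnd2 (f f1 f2 : LF) : bnd f1 -> bnd f2 ->
  (forall xs, `|f xs| <= `|f1 xs| + `|f2 xs|) -> bnd f.
Proof.
move=> [G1 [C1 [C10 h1]]] [G2 [C2 [C20 h2]]] h.
exists (G1 ++ G2), (C1 + C2); split; first exact: addr_ge0.
move=> xs; rewrite big_cat /=.
have S1 : 0 <= \sum_(x <- G1) `|xs x| by apply: sumr_ge0.
have S2 : 0 <= \sum_(x <- G2) `|xs x| by apply: sumr_ge0.
have := h1 xs; have := h2 xs; have := h xs.
move: (\sum_(x <- G1) `|xs x|) (\sum_(x <- G2) `|xs x|) S1 S2 => s1 s2 S1 S2.
by move=> *; nra.
Qed.

Lemma fvl_bnd (g : LF) : inFVL g -> bnd g.
Proof.
elim=> {g}.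
- move=> x; exists [:: x], 1; split => // xs.
  by rewrite big_seq1 mul1r.
- by exists [::], 0; split => // xs; rewrite normr0 mul0r.
- move=> f g _ hf _ hg; apply: bnd2 hf hg _ => xs; exact: ler_normD.
- move=> c f _ [G [C [C0 h]]]; exists G, (`|c| * C); split.
    exact: mulr_ge0.
  by move=> xs; rewrite normrM -mulrA; apply: ler_wpM2l.
- move=> f g _ hf _ hg; apply: bnd2 hf hg _ => xs; exact: max_nrm.
- move=> f g _ hf _ hg; apply: bnd2 hf hg _ => xs; exact: min_nrm.
Qed.

Lemma bnd_ub (f : LF) : bnd f -> has_ubound (norm_set f).
Proof.
move=> [G [C [C0 h]]]; exists (C * \sum_(x <- G) 1) => s [m [X [hX ->]]].
apply: (@le_trans _ _ (\sum_(i < m) C * \sum_(x <- G) `|X i x|)).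
  by apply: ler_sum => i _; exact: h.
rewrite -mulr_sumr; apply: ler_wpM2l => //.
rewrite exchange_big /=; apply: ler_sum => x _; exact: hX.
Qed.


Lemma zeroL_prop : is_Lstar (fun _ : L => (0 : R)).
Proof.
split; [|split] => *; rewrite ?minxx ?maxxx //.
by apply/andP; split; lra.
Qed.
Definition zeroL : Ls := MkLstar zeroL_prop.

Lemma ns0 (f : LF) : norm_set f 0.
Proof.
exists 0%N, (fun _ => zeroL); split; last by rewrite big_ord0.
by move=> a; rewrite big_ord0.
Qed.

Lemma ns_dom (f f1 f2 : LF) : has_ubound (norm_set f1) -> has_ubound (norm_set f2) ->
  (forall xs, `|f xs| <= `|f1 xs| + `|f2 xs|) -> has_ubound (norm_set f).
Proof.
move=> [B1 hB1] [B2 hB2] h; exists (B1 + B2) => s [m [X [hX ->]]].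
apply: (@le_trans _ _ (\sum_(i < m) (`|f1 (X i)| + `|f2 (X i)|))).
  by apply: ler_sum => i _; exact: h.
rewrite big_split /=; apply: lerD.
  by apply: hB1; exists m, X; split.
by apply: hB2; exists m, X; split.
Qed.

Lemma ns_pt (f : LF) xs : has_ubound (norm_set f) -> `|f xs| <= fnorm f.
Proof.
move=> hub; apply: ub_le_sup => //.
exists 1%N, (fun _ => xs); split; last by rewrite big_ord1.
move=> a; rewrite big_ord1 ler_norml.
by have [+ _] := lsprop xs; move=> /(_ a).
Qed.

Lemma fnorm_le (f1 f2 : LF) : has_ubound (norm_set f2) ->
  (forall xs, `|f1 xs| <= `|f2 xs|) -> fnorm f1 <= fnorm f2.
Proof.
move=> hub h; rewrite /fnorm; apply: ge_sup; first by exists 0; exact: ns0.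
move=> s [m [X [hX ->]]].
apply: (@le_trans _ _ (\sum_(i < m) `|f2 (X i)|)).
  by apply: ler_sum => i _; exact: h.
by apply: ub_le_sup => //; exists m, X; split.
Qed.

Lemma fnorm_zero (f : LF) : (forall xs, f xs = 0) -> fnorm f <= 0.
Proof.
move=> h; rewrite /fnorm; apply: ge_sup; first by exists 0; exact: ns0.
move=> s [m [X [hX ->]]].
by rewrite big1 // => i _; rewrite h normr0.
Qed.

Lemma fvl_inH (g : LF) : inFVL g -> inH g.
Proof. by move=> hg; split; [exact: fvl_ph | exact/bnd_ub/fvl_bnd]. Qed.

Lemma fvl_fbl (g : LF) : inFVL g -> inFBL g.
Proof.
move=> hg; split; first exact: fvl_inH.
move=> eps e0; exists g; split => //.
by apply: le_lt_trans (fnorm_zero _) e0 => xs; exact: subrr.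
Qed.

Lemma fbl_min (a h : LF) : inFBL a -> inFVL h ->
  inFBL (fun xs => Num.min (a xs) (h xs)).
Proof.
move=> [[pha uba] apx] hh.
have [phh ubh] := fvl_inH hh.
split; first split.
- move=> xs ys lam l0 e; rewrite (pha _ _ _ l0 e) (phh _ _ _ l0 e).
  by rewrite mul_min.
- by apply: ns_dom uba ubh _ => xs; exact: min_nrm.
move=> eps e0; have [g [hg gn]] := apx eps e0.
exists (fun xs => Num.min (g xs) (h xs)); split; first exact: FVL_min.
apply: le_lt_trans gn; apply: fnorm_le.
  have [_ ubg] := fvl_inH hg.
  apply: (ns_dom uba ubg) => xs.
  have := ler_normD (a xs) (- g xs); by rewrite normrN.
move=> xs; exact: min_lip1.
Qed.

Lemma fbl_cont (f : LF) : inFBL f -> forall eps : R, 0 < eps ->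
  exists dl : R, 0 < dl /\ forall z1 z2 : Ls,
   (forall x, `|z1 x - z2 x| <= dl) -> `|f z1 - f z2| < eps.
Proof.
move=> [[_ ubf] apx] eps e0.
have e3 : 0 < eps / 3 by apply: divr_gt0.
have [g [hg gn]] := apx _ e3.
have [_ ubg] := fvl_inH hg.
have ubd : has_ubound (norm_set (fun xs => f xs - g xs)).
  apply: (ns_dom ubf ubg) => xs.
  have := ler_normD (f xs) (- g xs); by rewrite normrN.
have pt := fun xs => ns_pt xs ubd.
have [C [C0 hC]] := fvl_lip hg.
exists (eps / 3 / (C + 1)); split; first by apply: divr_gt0 => //; lra.
move=> z1 z2 hz.
have h1 := pt z1; have h2 := pt z2; have h3 := hC _ _ _ hz.
have h4 : C * (eps / 3 / (C + 1)) <= eps / 3.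
  rewrite mulrA ler_pdivrMr; last by lra.
  move: (eps / 3) e3 => t t0; nra.
have := ler_normD (f z1 - g z1) (g z1 - f z2).
have := ler_normD (g z1 - g z2) (g z2 - f z2).
have -> : f z1 - g z1 + (g z1 - f z2) = f z1 - f z2 by ring.
have -> : g z1 - g z2 + (g z2 - f z2) = g z1 - f z2 by ring.
have : `|g z2 - f z2| = `|f z2 - g z2| by rewrite -normrN opprB.
move=> *; lra.
Qed.


Lemma fvl_ext (f g : LF) : inFVL f -> (forall xs, f xs = g xs) -> inFVL g.
Proof. by move=> hf h; have -> : g = f by apply: funext => xs; rewrite h. Qed.

Lemma fvl_opp (f : LF) : inFVL f -> inFVL (fun xs => - f xs).
Proof. by move=> hf; apply: (fvl_ext (FVL_scale (-1) hf)) => xs; rewrite mulN1r. Qed.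

Lemma fvl_sub (f g : LF) : inFVL f -> inFVL g -> inFVL (fun xs => f xs - g xs).
Proof. by move=> hf hg; exact: (FVL_add hf (fvl_opp hg)). Qed.

Lemma fvl_abs (f : LF) : inFVL f -> inFVL (fun xs => `|f xs|).
Proof. by move=> hf; apply: (fvl_ext (FVL_max hf (fvl_opp hf))) => xs; rewrite maxrN. Qed.

Lemma lsb (xs : Ls) x : -1 <= xs x <= 1.
Proof. by have [+ _] := lsprop xs; apply. Qed.

Lemma small_eps (dl : R) : 0 < dl -> exists e : R, [/\ 0 < e, e <= dl / 2 & e <= 1 / 2].
Proof.
move=> d0; exists (Num.min (dl / 2) (1 / 2)).
by case: (leP (dl / 2) (1 / 2)) => h; split => //; lra.
Qed.

Lemma no_atom (w : Ls) (p q : L) : w p = 0 -> w q = 1 ->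
  ~ exists a : LF, is_atom (@inFBL R d L) a.
Proof.
move=> wp wq [a [fa [a0 [[xs0 nz] atom]]]].
have apos : 0 < a xs0 by rewrite lt_neqAle eq_sym; apply/andP; split; [exact/eqP | exact: a0].
have key : forall (z1 z2 : Ls) (h : LF), inFVL h -> (forall xs, 0 <= h xs) ->
    0 < h z1 -> h z2 = 0 -> 0 < a z1 -> 0 < a z2 -> False.
  move=> z1 z2 h hh h0 h1 h2 a1 a2.
  have := atom (fun xs => Num.min (a xs) (h xs)) (fbl_min fa hh).
  case.
  - move=> xs /=; have := a0 xs; have := h0 xs.
    by case: (leP (a xs) (h xs)).
  - by move=> xs /=; case: (leP (a xs) (h xs)) => //; move=> *; lra.
  move=> lam [l0 hl].
  have e1 := hl z1; have e2 := hl z2.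
  rewrite h2 min_r in e2; last exact: ltW.
  have : lam = 0.
    by move/eqP: e2; rewrite eq_sym mulf_eq0 => /orP [/eqP //| /eqP]; lra.
  move=> l00; rewrite l00 mul0r in e1.
  by move: e1; case: (leP (a z1) (h z1)); lra.
have two : (0 : R) < 2 by lra.
have [dl [d0 hd]] := fbl_cont fa (divr_gt0 apos two).
have near : forall z : Ls, (forall x, `|z x - xs0 x| <= dl) -> 0 < a z.
  move=> z hz; have := hd _ _ hz; have [n1 n2] := nb (a z - a xs0); lra.
have [e [e0 ed e1]] := small_eps d0.
case: (pselect (exists x y, xs0 x <> xs0 y)).
- move=> [x [y nxy]].
  have [z2 hz2] : exists z : Ls, forall u, z u = e + (1 - e) * xs0 u.
    apply: affL; first lra.
    by move=> u; have /andP[b1 b2] := lsb xs0 u; apply/andP; split; nra.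
  pose h := fun xs : Ls => `|z2 y * xs x - z2 x * xs y|.
  apply: (key xs0 z2 h).
  + apply: fvl_abs; apply: fvl_sub.
      exact: (FVL_scale (z2 y) (FVL_delta R x)).
    exact: (FVL_scale (z2 x) (FVL_delta R y)).
  + by move=> xs; exact: normr_ge0.
  + rewrite /h normr_gt0 !hz2.
    have -> : (e + (1 - e) * xs0 y) * xs0 x - (e + (1 - e) * xs0 x) * xs0 y
      = e * (xs0 x - xs0 y) by ring.
    by rewrite mulf_neq0 ?subr_eq0; [|lra|exact/eqP].
  + by rewrite /h mulrC subrr normr0.
  + exact: apos.
  + apply: near => u; rewrite hz2.
    have /andP[b1 b2] := lsb xs0 u.
    by rewrite ler_norml; apply/andP; split; nra.
- move=> nc.
  have cst : forall u, xs0 u = xs0 p.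
    move=> u; apply: contrapT => ne; apply: nc; by exists u, p.
  have [z2 hz2] : exists z : Ls, forall u, z u = (1 - e) * xs0 p + e * w u.
    apply: affL; first lra.
    move=> u; have /andP[b1 b2] := lsb w u; have /andP[c1 c2] := lsb xs0 p.
    by apply/andP; split; nra.
  pose h := fun xs : Ls => `|xs q - xs p|.
  apply: (key z2 xs0 h).
  + by apply: fvl_abs; apply: fvl_sub; exact: FVL_delta.
  + by move=> xs; exact: normr_ge0.
  + rewrite /h !hz2 wp wq.
    have -> : (1 - e) * xs0 p + e * 1 - ((1 - e) * xs0 p + e * 0) = e by ring.
    by rewrite gtr0_norm.
  + by rewrite /h (cst q) subrr normr0.
  + apply: near => u; rewrite hz2 (cst u).
    have /andP[b1 b2] := lsb w u; have /andP[c1 c2] := lsb xs0 p.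
    by rewrite ler_norml; apply/andP; split; nra.
  + exact: apos.
Qed.


Lemma archi (x : R) : exists n : nat, x < n%:R.
Proof.
exists (Num.bound `|x|); apply: le_lt_trans (ler_norm x) _.
exact: archi_boundP.
Qed.

Lemma ub_aux (P D e k n : R) : 0 <= P -> 0 < e -> k * e = 1 -> 0 <= n ->
  Num.min P (n * Num.max (D - P) 0) <= Num.min P (k * Num.max (D - (1 - e) * P) 0).
Proof.
move=> P0 e0 ke n0.
have k0 : 0 < k by nra.
case: (leP (D - P) 0) => h1.
  rewrite mulr0 (min_r P0).
  case: (leP (D - (1 - e) * P) 0) => h2.
    by rewrite mulr0 (min_r P0).
  by case: (leP P (k * (D - (1 - e) * P))) => h3; nra.
case: (leP (D - (1 - e) * P) 0) => h2; first nra.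
have h4 : P <= k * (D - (1 - e) * P) by nra.
rewrite (min_l h4).
by case: (leP P (n * (D - P))) => h5; lra.
Qed.

Lemma not_sigma (w : Ls) (p q : L) : w p = 0 -> w q = 1 ->
  ~ dedekind_sigma_complete (@inFBL R d L).
Proof.
move=> wp wq H.
pose u (n : nat) : LF := fun xs => Num.min `|xs p| (n%:R * Num.max (xs q - xs p - `|xs p|) 0).
have hu : forall n, inFVL (u n).
  move=> n; apply: FVL_min; first exact: fvl_abs (FVL_delta R p).
  apply: FVL_scale; apply: FVL_max; last exact: FVL_zero.
  apply: fvl_sub; last exact: fvl_abs (FVL_delta R p).
  by apply: fvl_sub; exact: FVL_delta.
have hb : exists b, inFBL b /\ forall n, fle (u n) b.
  exists (fun xs => `|xs p|); split; first exact/fvl_fbl/fvl_abs/(FVL_delta R p).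
  by move=> n xs; rewrite /u; case: (leP `|xs p| _) => //; lra.
have [s [fs [ubs leasts]]] := H u (fun n => fvl_fbl (hu n)) hb.
have [e [e0 ed e1]] : exists e : R, [/\ 0 < e, e <= 1 & True].
  by exists 1; split => //; lra.
pose r : R := 1 / 8.
have two : (0 : R) < r / 2 by rewrite /r; lra.
have [dl [d0 hd]] := fbl_cont fs two.
have [e' [e'0 e'd e'1]] := small_eps d0.
have [zp hzp] : exists z : Ls, forall x, z x = r + r * (1 + e') * w x.
  apply: affL; first by rewrite /r; nra.
  by move=> x; have /andP[b1 b2] := lsb w x; apply/andP; split; rewrite /r; nra.
have [zm hzm] : exists z : Ls, forall x, z x = r + r * (1 - e') * w x.
  apply: affL; first by rewrite /r; nra.
  by move=> x; have /andP[b1 b2] := lsb w x; apply/andP; split; rewrite /r; nra.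
have [n hn] := archi (e'^-1).
have hs1 : r <= s zp.
  apply: le_trans (ubs (u n) (ex_intro _ n erefl) zp).
  rewrite /u !hzp wp wq mulr0 mulr1 addr0.
  have -> : r + r * (1 + e') - r - `|r| = r * e' by rewrite /r ger0_norm; [ring | lra].
  rewrite max_l; last by rewrite /r; nra.
  rewrite /r ger0_norm; last lra.
  have ne : 1 < n%:R * e'.
    have hv : e'^-1 * e' = 1 by rewrite mulVf //; apply/eqP; lra.
    nra.
  by rewrite min_l //; nra.
pose t : LF := fun xs => Num.min `|xs p| (e'^-1 * Num.max (xs q - xs p - (1 - e') * `|xs p|) 0).
have ht : inFVL t.
  apply: FVL_min; first exact: fvl_abs (FVL_delta R p).
  apply: FVL_scale; apply: FVL_max; last exact: FVL_zero.
  apply: fvl_sub; last exact: FVL_scale (fvl_abs (FVL_delta R p)).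
  by apply: fvl_sub; exact: FVL_delta.
have hs2 : s zm <= 0.
  apply: le_trans (leasts t (fvl_fbl ht) _ zm) _.
    move=> a [m ->] xs; rewrite /u /t.
    have := @ub_aux `|xs p| (xs q - xs p) e' e'^-1 m%:R (normr_ge0 _) e'0.
    rewrite mulVf; last by apply/eqP; lra.
    by apply => //; exact: ler0n.
  rewrite /t !hzm wp wq mulr0 mulr1 addr0 /r ger0_norm; last lra.
  have -> : 1 / 8 + 1 / 8 * (1 - e') - 1 / 8 - (1 - e') * (1 / 8) = 0 :> R by ring.
  by rewrite maxxx mulr0 min_r //; lra.
have := hd zp zm.
have : `|s zp - s zm| < r / 2 -> False.
  by have [n1 n2] := nb (s zp - s zm); lra.
move=> hh hz; apply: hh; apply: hz => x.
rewrite hzp hzm.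
have /andP[b1 b2] := lsb w x.
have -> : r + r * (1 + e') * w x - (r + r * (1 - e') * w x) = 2 * r * e' * w x by ring.
by rewrite ler_norml /r; apply/andP; split; nra.
Qed.


Fixpoint pen (a : L) (G : seq L) (xs : Ls) : R :=
  if G is x :: G' then Num.max `|xs x - xs a| (pen a G' xs) else 0.

Lemma pen_ge0 a G (xs : Ls) : 0 <= pen a G xs.
Proof.
elim: G => [|x G IH] //=.
by case: (leP `|xs x - xs a| (pen a G xs)).
Qed.

Lemma pen_mem a G (xs : Ls) x : x \in G -> `|xs x - xs a| <= pen a G xs.
Proof.
elim: G => [|y G IH] //=; rewrite in_cons => /orP [/eqP ->|hx].
  by case: (leP `|xs y - xs a| (pen a G xs)) => // h; exact: ltW.
have := IH hx.
by case: (leP `|xs y - xs a| (pen a G xs)) => //; lra.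
Qed.

Lemma pen_le a G (xs : Ls) (M : R) : 0 <= M ->
  (forall x, x \in G -> `|xs x - xs a| <= M) -> pen a G xs <= M.
Proof.
move=> M0; elim: G => [|y G IH] h //=.
have h1 := h y (mem_head _ _).
have h2 := IH (fun x hx => h x (@mem_behead _ (y :: G) x hx)).
by case: (leP `|xs y - xs a| (pen a G xs)).
Qed.

Lemma pen_fvl a G : inFVL (pen a G).
Proof.
elim: G => [|y G IH].
  by exact: (FVL_zero R).
apply: (fvl_ext (FVL_max (fvl_abs (fvl_sub (FVL_delta R y) (FVL_delta R a))) IH)).
by [].
Qed.

Lemma not_oc (w : Ls) (p q : L) : w p = 0 -> w q = 1 ->
  ~ order_continuous_norm (@inFBL R d L).
Proof.
move=> wp wq H.
pose I := (seq L * nat)%type.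
pose le (i j : I) := {subset i.1 <= j.1} /\ (i.2 <= j.2)%N.
pose x (i : I) : LF := fun xs => Num.max (`|xs p| - i.2%:R * pen p i.1 xs) 0.
have hx : forall i, inFVL (x i).
  move=> i; apply: FVL_max; last exact: FVL_zero.
  apply: fvl_sub; first exact: fvl_abs (FVL_delta R p).
  exact: FVL_scale (pen_fvl p i.1).
have half : (0 : R) < 1 / 2 by lra.
have [] := H I le x _ _ _ _ (fun i => fvl_fbl (hx i)) _ _ _ half.
- by exists ([::], 0%N).
- by move=> i; split => //.
- move=> i j k [h1 h2] [h3 h4]; split; first by move=> y /h1 /h3.
  exact: leq_trans h4.
- move=> i j; exists (i.1 ++ j.1, maxn i.2 j.2); split; split => /=.
  + by move=> y hy; rewrite mem_cat hy.
  + exact: leq_maxl.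
  + by move=> y hy; rewrite mem_cat hy orbT.
  + exact: leq_maxr.
- move=> i j [h1 h2] xs; rewrite /x.
  have hp : pen p i.1 xs <= pen p j.1 xs.
    apply: pen_le; first exact: pen_ge0.
    by move=> y /h1 hy; exact: pen_mem.
  have hn : (i.2%:R : R) <= j.2%:R by rewrite ler_nat.
  have := pen_ge0 p i.1 xs; have := ler0n R i.2.
  move=> *.
  have : i.2%:R * pen p i.1 xs <= j.2%:R * pen p j.1 xs by nra.
  case: (leP (`|xs p| - j.2%:R * pen p j.1 xs) 0);
    case: (leP (`|xs p| - i.2%:R * pen p i.1 xs) 0); lra.
- split; first exact/fvl_fbl/FVL_zero.
  split.
    move=> a [i ->] xs; rewrite /x.
    by case: (leP (`|xs p| - i.2%:R * pen p i.1 xs) 0) => // h; exact: ltW.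
  move=> t ft ht.
  have nonc : forall xs : Ls, (exists y, xs y <> xs p) -> t xs <= 0.
    move=> xs [y ny].
    have dpos : 0 < `|xs y - xs p| by rewrite normr_gt0 subr_eq0; exact/eqP.
    have [n hn] := archi (`|xs p| / `|xs y - xs p|).
    have := ht (x ([:: y], n)) (ex_intro _ _ erefl) xs.
    rewrite /x /= .
    have -> : Num.max `|xs y - xs p| 0 = `|xs y - xs p|.
      by rewrite max_l // ltW.
    rewrite max_r //.
    move: hn; rewrite ltr_pdivrMr // => hn.
    lra.
  move=> xs; apply: contrapT => /negP; rewrite -ltNge => tpos.
  case: (pselect (exists y, xs y <> xs p)) => [ex|nex].
    by have := nonc xs ex; lra.
  have cst : forall u, xs u = xs p.
    by move=> u; apply: contrapT => ne; apply: nex; exists u.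
  have [dl [d0 hd]] := fbl_cont ft tpos.
  have [e [e0 ed e1]] := small_eps d0.
  have [z hz] : exists z : Ls, forall u, z u = (1 - e) * xs p + e * w u.
    apply: affL; first lra.
    move=> u; have /andP[b1 b2] := lsb w u; have /andP[c1 c2] := lsb xs p.
    by apply/andP; split; nra.
  have tz : t z <= 0.
    apply: nonc; exists q; rewrite !hz wp wq.
    by move=> hh; lra.
  have : `|t z - t xs| < t xs.
    apply: hd => u; rewrite hz (cst u).
    have /andP[b1 b2] := lsb w u; have /andP[c1 c2] := lsb xs p.
    by rewrite ler_norml; apply/andP; split; nra.
  by have [n1 n2] := nb (t z - t xs); lra.
move=> i0 hi0.
have [one hone] : exists z : Ls, forall u, z u = 1 + 0 * w u.
  apply: affL => // u; rewrite mul0r addr0; apply/andP; split; lra.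
have hle : le i0 i0 by split.
have := hi0 i0 hle.
have [_ ubx] := fvl_inH (hx i0).
have := ns_pt one ubx.
have -> : x i0 one = 1.
  rewrite /x.
  have -> : pen p i0.1 one = 0.
    apply/eqP; rewrite eq_le pen_ge0 andbT; apply: pen_le => // y _.
    by rewrite !hone !mul0r subrr normr0.
  by rewrite hone mul0r addr0 mulr0 subr0 normr1 max_l //; lra.
by rewrite normr1; lra.
Qed.

End S.

Theorem mainTheorem12 (R : realType) (d : Order.disp_t) (L : distrLatticeType d) :
  (exists a b : L, a <> b) ->
  [/\ ~ dedekind_sigma_complete (@inFBL R d L),
      ~ order_continuous_norm (@inFBL R d L)
    & ~ (exists a : LFun R L, is_atom (@inFBL R d L) a)].
Proof.
move=> hab; have [w [p [q [wp wq]]]] := @nonconst_hom R d L hab.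
split; [exact: (@not_sigma R d L w p q wp wq) | exact: (@not_oc R d L w p q wp wq)
  | exact: (@no_atom R d L w p q wp wq)].
Qed.
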